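(* Let $G$ be a connected graph and let $v(0)\in\mathbb R^n$ be arbitrary. Then for every $t\ge0$, $$\sqrt{\mathbb E\|v(t)-\bar v\|_2^2}\;\le\;\Big(1-\frac{1}{2\gamma(G)}\Big)^{t/2}\|\bar v-v(0)\|_2 .$$ Furthermore, for every $t\ge 0$, $$\sup_{\|v(0)\|_2=1}\sqrt{\mathbb E\|v(t)-\bar v\|_2^2}\;\ge\;\Big(1-\frac{1}{2\gamma(G)}\Big)^{t}.$$
   Context: Let $G=(V,E)$ be a finite, undirected, connected graph with $V=\{1,\dots,n\}$. The averaging process on $G$: the state vector $v(t)\in\mathbb R^n$, $t=0,1,2,\dots$, starts from a given $v(0)$; at each step $t\ge 1$ an edge $\{i,j\}\in E$ is chosen uniformly at random (independently of all previous choices) and both $v_i$ and $v_j$ are replaced by $(v_i+v_j)/2$, all other coordinates unchanged. Let $\bar v=(a,\dots,a)^T$ with $a=\frac1n\sum_i v_i(0)$. Let $L=D-A$ be the graph Laplacian ($D$ the diagonal degree matrix, $A$ the adjacency matrix), $\lambda_2(G)$ its second smallest eigenvalue, and $\gamma(G)=|E|/\lambda_2(G)$. *)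

(* Defs.v *)
From HB Require Import structures.
From mathcomp Require Import all_boot all_order all_algebra.
From mathcomp Require Import all_classical all_reals all_analysis.
Set Implicit Arguments. Unset Strict Implicit. Unset Printing Implicit Defensive.
Import Order.TTheory GRing.Theory Num.Theory.
Local Open Scope ring_scope.

Section Averaging.
Variables (R : realType) (n : nat).

(* A simple graph on V = 'I_n is a symmetric irreflexive relation e.
   Each undirected edge {i,j} is represented once, as the pair (i,j) with i < j. *)
Definition edges (e : rel 'I_n) : {set 'I_n * 'I_n} :=
  [set p : 'I_n * 'I_n | (p.1 < p.2)%N && e p.1 p.2].

Definition degree (e : rel 'I_n) (i : 'I_n) : nat := #|[set j | e i j]|.

Definition laplacian (e : rel 'I_n) : 'M[R]_n :=
  \matrix_(i, j) ((if i == j then (degree e i)%:R else 0)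
                  - (if e i j then 1 else 0)).

(* lam is the second smallest eigenvalue of the (real) matrix M, eigenvalues
   counted with multiplicity: the sorted list of all eigenvalues is s. *)
Definition is_lambda2 (M : 'M[R]_n) (lam : R) : Prop :=
  exists s : seq R, [/\ sorted <=%R s, size s = n,
    char_poly M = \prod_(x <- s) ('X - x%:P) & lam = s`_1].

Definition norm2 (v : 'cV[R]_n) : R := Num.sqrt (\sum_i v i 0 ^+ 2).

Definition avg_step (p : 'I_n * 'I_n) (v : 'cV[R]_n) : 'cV[R]_n :=
  \col_k (if (k == p.1) || (k == p.2) then (v p.1 0 + v p.2 0) / 2 else v k 0).

Definition traj (t : nat) (v0 : 'cV[R]_n) (s : {ffun 'I_t -> 'I_n * 'I_n}) :=
  foldl (fun w k => avg_step (s k) w) v0 (enum 'I_t).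

Definition vbar (v0 : 'cV[R]_n) : 'cV[R]_n :=
  const_mx ((\sum_i v0 i 0) / n%:R).

(* E ||v(t) - vbar||_2^2 : exact expectation over the |E|^t equally likely
   sequences of t independently uniformly chosen edges. *)
Definition exp_sqdist (e : rel 'I_n) (t : nat) (v0 : 'cV[R]_n) : R :=
  (\sum_(s : {ffun 'I_t -> 'I_n * 'I_n} | [forall k, s k \in edges e])
      norm2 (traj v0 s - vbar v0) ^+ 2) / (#|edges e|%:R ^+ t).

End Averaging.

(* Main.v *)
Require Import Defs.
From HB Require Import structures.
From mathcomp Require Import all_boot all_order all_algebra.
From mathcomp Require Import all_classical all_reals all_analysis.
From mathcomp Require Import ring lra.
Import Order.TTheory GRing.Theory Num.Theory.
Local Open Scope ring_scope.
Set Implicit Arguments. Unset Strict Implicit. Unset Printing Implicit Defensive.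

Section Graph.
Variables (R : realType) (n : nat) (e : rel 'I_n).
Hypotheses (esym : symmetric e) (eirr : irreflexive e).

Definition Qf (f : 'I_n -> R) := \sum_(p in edges e) (f p.1 - f p.2) ^+ 2.

Lemma edge_sum (G : 'I_n -> 'I_n -> R) :
  \sum_(p in edges e) (G p.1 p.2 + G p.2 p.1) =
  \sum_i \sum_j (if e i j then G i j else 0).
Proof.
rewrite big_split /=.
have H (F : 'I_n * 'I_n -> R) : \sum_(p in edges e) F p =
    \sum_(i : 'I_n) \sum_(j : 'I_n) (if (i < j)%N && e i j then F (i, j) else 0).
  rewrite pair_big /= big_mkcond /=.
  apply: eq_big => // -[i j] _ /=; by rewrite inE.
rewrite !H [X in _ + X = _]exchange_big /= -big_split /=.
apply: eq_bigr => i _; rewrite -big_split /=; apply: eq_bigr => j _.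
rewrite [e j i]esym.
case: (ltngtP i j) => [lt|gt|eq]; rewrite ?andbF ?andbT //=.
- by case: (e i j); rewrite ?addr0.
- by case: (e i j); rewrite ?add0r.
- have -> : i = j by apply: val_inj.
  by rewrite eirr addr0.
Qed.

Lemma Qf_ge0 f : 0 <= Qf f.
Proof. by apply: sumr_ge0 => p _; rewrite sqr_ge0. Qed.

Lemma Qf_eq0 f : Qf f = 0 -> forall i j, e i j -> f i = f j.
Proof.
move=> H0 i j eij.
case: (ltngtP i j) => [lt|gt|eq].
- have := psumr_eq0P (fun p _ => sqr_ge0 (f p.1 - f p.2)) H0.
  move=> /(_ (i, j)); rewrite inE /= lt eij => /(_ isT) /eqP.
  by rewrite sqrf_eq0 subr_eq0 => /eqP.
- have := psumr_eq0P (fun p _ => sqr_ge0 (f p.1 - f p.2)) H0.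
  move=> /(_ (j, i)); rewrite inE /= gt esym eij => /(_ isT) /eqP.
  by rewrite sqrf_eq0 subr_eq0 => /eqP.
- by have -> : i = j by apply: val_inj.
Qed.

Lemma Qf_const f : Qf f = 0 -> (forall i j, connect e i j) -> forall i j, f i = f j.
Proof.
move=> H0 conn i j; have /connectP [p pth ->] := conn i j.
elim: p i pth => [|a p IH] i //= /andP [eia pth].
by rewrite (Qf_eq0 H0 eia) IH.
Qed.

Lemma degreeE i : (degree e i)%:R = \sum_j (if e i j then 1 else 0 : R).
Proof.
rewrite /degree -big_mkcond /= sumr_const; congr (_ %:R).
by rewrite cardsE.
Qed.

Lemma lapE i j : laplacian R e i j =
  (if i == j then (degree e i)%:R else 0) - (if e i j then 1 else 0).
Proof. by rewrite mxE. Qed.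

Lemma lap_sym : (laplacian R e)^T = laplacian R e.
Proof.
apply/matrixP => i j; rewrite !mxE esym eq_sym.
by case: eqP => // ->.
Qed.

Lemma lap_rowsum i : \sum_j laplacian R e i j = 0.
Proof.
rewrite (eq_bigr (fun j => (if i == j then (degree e i)%:R else 0) - (if e i j then 1 else 0))); last by move=> j _; rewrite mxE.
rewrite sumrB (bigD1 i) //= eqxx big1 ?addr0 ?degreeE ?subrr //.
by move=> j; rewrite eq_sym => /negbTE ->.
Qed.

Lemma lap_colsum j : \sum_i laplacian R e i j = 0.
Proof.
rewrite -[RHS](lap_rowsum j); apply: eq_bigr => i _.
by rewrite !lapE esym eq_sym; case: eqP => // ->.
Qed.

Definition esum (G : 'I_n -> 'I_n -> R) := \sum_i \sum_j (if e i j then G i j else 0).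

Lemma esumD G1 G2 : esum (fun i j => G1 i j + G2 i j) = esum G1 + esum G2.
Proof.
rewrite /esum -big_split; apply: eq_bigr => i _; rewrite -big_split; apply: eq_bigr => j _.
by case: (e i j); rewrite /= ?addr0.
Qed.

Lemma esumZ c G : esum (fun i j => c * G i j) = c * esum G.
Proof.
rewrite /esum mulr_sumr; apply: eq_bigr => i _; rewrite mulr_sumr; apply: eq_bigr => j _.
by case: (e i j); rewrite ?mulr0.
Qed.

Lemma esum_ext G1 G2 : (forall i j, G1 i j = G2 i j) -> esum G1 = esum G2.
Proof. by move=> H; rewrite /esum; apply: eq_bigr => i _; apply: eq_bigr => j _; rewrite H. Qed.

Lemma esum_sym G : esum (fun i j => G j i) = esum G.
Proof.
rewrite /esum exchange_big /=; apply: eq_bigr => i _; apply: eq_bigr => j _.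
by rewrite esym.
Qed.

Lemma lap_quad (f : 'I_n -> R) :
  \sum_i \sum_j f i * laplacian R e i j * f j = Qf f.
Proof.
have h1 : Qf f * 2 = esum (fun i j => (f i - f j)^+2).
  rewrite /esum -(edge_sum (fun i j => (f i - f j)^+2)) /Qf mulr_suml; apply: eq_bigr => p _; rewrite -sqrrN opprB; ring.
have h2 : esum (fun i j => (f i - f j)^+2) =
    esum (fun i j => f i ^+ 2) + esum (fun i j => f j ^+ 2) + (-2) * esum (fun i j => f i * f j).
  rewrite -esumZ -!esumD; apply: esum_ext => i j; ring.
have h3 := esum_sym (fun i j => f i ^+ 2).
have h4 : \sum_i \sum_j f i * laplacian R e i j * f j =
   esum (fun i j => f i ^+ 2) - esum (fun i j => f i * f j).
  rewrite /esum -sumrB; apply: eq_bigr => i _.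
  have -> : \sum_j (if e i j then f i ^+ 2 else 0) = f i ^+ 2 * (degree e i)%:R.
    rewrite degreeE mulr_sumr; apply: eq_bigr => j _.
    by case: (e i j); rewrite ?mulr1 ?mulr0.
  rewrite (eq_bigr (fun j => (if i == j then f i ^+ 2 * (degree e i)%:R else 0)
       - (if e i j then f i * f j else 0))); last first.
    move=> j _; rewrite mxE.
    case: eqP => [<-|_]; rewrite ?eirr; case: (e i j); rewrite ?mulr1 ?mulr0 ?subr0 ?sub0r; try ring.
  rewrite sumrB (bigD1 i) //= eqxx big1 ?addr0 //.
  by move=> j; rewrite eq_sym => /negbTE ->.
simpl in h3.
lra.
Qed.

End Graph.

Set Implicit Arguments. Unset Strict Implicit. Unset Printing Implicit Defensive.

Section Vec.
Variables (R : realType) (n : nat).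

Definition dot (x y : 'cV[R]_n) := \sum_i x i 0 * y i 0.
Definition sumv (x : 'cV[R]_n) := \sum_i x i 0.

Lemma dotC x y : dot x y = dot y x.
Proof. by apply: eq_bigr => i _; rewrite mulrC. Qed.

Lemma dotDl x y z : dot (x + y) z = dot x z + dot y z.
Proof. by rewrite /dot -big_split; apply: eq_bigr => i _; rewrite !mxE mulrDl. Qed.

Lemma dotDr x y z : dot z (x + y) = dot z x + dot z y.
Proof. by rewrite dotC dotDl !(dotC z). Qed.

Lemma dotZl c x y : dot (c *: x) y = c * dot x y.
Proof. by rewrite /dot mulr_sumr; apply: eq_bigr => i _; rewrite !mxE mulrA. Qed.

Lemma dotZr c x y : dot x (c *: y) = c * dot x y.
Proof. by rewrite dotC dotZl dotC. Qed.

Lemma dotNl x y : dot (- x) y = - dot x y.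
Proof. by rewrite -scaleN1r dotZl mulN1r. Qed.

Lemma dotBl x y z : dot (x - y) z = dot x z - dot y z.
Proof. by rewrite dotDl dotNl. Qed.

Lemma dotBr x y z : dot z (x - y) = dot z x - dot z y.
Proof. by rewrite dotC dotBl !(dotC z). Qed.

Lemma dot0r x : dot x 0 = 0.
Proof. by rewrite /dot big1 // => i _; rewrite mxE mulr0. Qed.

Lemma dot_ge0 x : 0 <= dot x x.
Proof. by apply: sumr_ge0 => i _; rewrite -expr2 sqr_ge0. Qed.

Lemma dot_eq0 x : dot x x = 0 -> x = 0.
Proof.
move=> H; apply/matrixP => i j; rewrite (ord1 j) mxE.
have H2 : forall i : 'I_n, true -> 0 <= x i 0 * x i 0 by move=> k _; rewrite -expr2 sqr_ge0.
have := psumr_eq0P H2 H => /(_ i isT) /eqP.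
by rewrite mulf_eq0 orbb => /eqP.
Qed.

Lemma dot_mulmx (B : 'M[R]_n) x y : B^T = B -> dot x (B *m y) = dot (B *m x) y.
Proof.
move=> sB; rewrite /dot.
under eq_bigr do rewrite mxE mulr_sumr.
under [RHS]eq_bigr do rewrite mxE mulr_suml.
rewrite exchange_big /=; apply: eq_bigr => i _; apply: eq_bigr => j _.
by rewrite -{1}sB mxE; ring.
Qed.

Lemma sumvD x y : sumv (x + y) = sumv x + sumv y.
Proof. by rewrite /sumv -big_split; apply: eq_bigr => i _; rewrite mxE. Qed.

Lemma sumvZ c x : sumv (c *: x) = c * sumv x.
Proof. by rewrite /sumv mulr_sumr; apply: eq_bigr => i _; rewrite mxE. Qed.

Lemma sumvB x y : sumv (x - y) = sumv x - sumv y.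
Proof. by rewrite sumvD -scaleN1r sumvZ mulN1r. Qed.

End Vec.

Section Spectral.
Variables (R : realType) (m : nat) (e : rel 'I_m.+1).
Hypotheses (esym : symmetric e) (eirr : irreflexive e)
  (conn : forall i j, connect e i j).
Local Notation n := m.+1.
Local Notation L := (laplacian R e).

Definition qf (x : 'cV[R]_n) := Qf e (fun i => x i 0).

Lemma qf_dot x : qf x = dot x (L *m x).
Proof.
rewrite /qf -lap_quad // /dot; apply: eq_bigr => i _.
rewrite mxE mulr_sumr; apply: eq_bigr => j _; by rewrite mulrA.
Qed.

Lemma sumv_L x : sumv (L *m x) = 0.
Proof.
rewrite /sumv; under eq_bigr do rewrite mxE.
rewrite exchange_big /= big1 // => j _.
by rewrite -mulr_suml lap_colsum // mul0r.
Qed.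

Definition hm (p : {poly R}) : 'M[R]_n := horner_mx L p.
Definition pr (rs : seq R) : {poly R} := \prod_(r <- rs) ('X - r%:P).

Lemma hm_cons a rs : hm (pr (a :: rs)) = (L - a%:M) *m hm (pr rs).
Proof.
by rewrite /hm /pr big_cons rmorphM /= rmorphB /= horner_mx_X horner_mx_C mulmxE.
Qed.

Lemma hm_nil : hm (pr [::]) = 1%:M.
Proof. by rewrite /hm /pr big_nil rmorph1. Qed.

Lemma hm_comm p q : hm p *m hm q = hm q *m hm p.
Proof. by have := comm_horner_mx2 L p q; rewrite /GRing.comm !mulmxE. Qed.

Lemma hm_sym p : (hm p)^T = hm p.
Proof.
elim/poly_ind: p => [|p c IH].
  by rewrite /hm rmorph0 trmx0.
rewrite /hm rmorphD rmorphM /= horner_mx_X horner_mx_C linearD /= tr_scalar_mx.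
rewrite -mulmxE trmx_mul lap_sym // -/(hm p) IH.
congr (_ + _).
have H := hm_comm p (polyX R); rewrite /hm horner_mx_X in H; by rewrite /hm H.
Qed.

Lemma sym_sq p (z : 'cV[R]_n) : hm p *m (hm p *m z) = 0 -> hm p *m z = 0.
Proof.
move=> H; apply: dot_eq0.
by rewrite -dot_mulmx ?hm_sym // H dot0r.
Qed.

Lemma undup_ker rs (z : 'cV[R]_n) : hm (pr rs) *m z = 0 -> hm (pr (undup rs)) *m z = 0.
Proof.
elim: rs z => [|a rs IH] z //=.
rewrite hm_cons => H.
have H1 : hm (pr rs) *m ((L - a%:M) *m z) = 0.
  have -> : L - a%:M = hm ('X - a%:P) by rewrite /hm rmorphB /= horner_mx_X horner_mx_C.
  rewrite mulmxA hm_comm -mulmxA mulmxA -H; congr (_ *m _ *m _).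
  by rewrite /hm rmorphB /= horner_mx_X horner_mx_C.
have := IH _ H1.
have -> : L - a%:M = hm ('X - a%:P) by rewrite /hm rmorphB /= horner_mx_X horner_mx_C.
rewrite mulmxA hm_comm -mulmxA => H2.
case: ifP => ain.
  have ain' : a \in undup rs by rewrite mem_undup.
  move: H2; rewrite /pr (big_rem _ ain') /= -/(pr _).
  have -> : hm (('X - a%:P) * pr (rem a (undup rs))) = hm ('X - a%:P) *m hm (pr (rem a (undup rs))).
    by rewrite /hm rmorphM mulmxE.
  rewrite -mulmxA => H3.
  exact: sym_sq H3.
rewrite hm_cons.
have -> : L - a%:M = hm ('X - a%:P) by rewrite /hm rmorphB /= horner_mx_X horner_mx_C.
by rewrite -mulmxA.
Qed.


Lemma eig_poly rs (y : 'cV[R]_n) a : L *m y = a *: y ->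
  hm (pr rs) *m y = (\prod_(r <- rs) (a - r)) *: y.
Proof.
move=> Hy; elim: rs => [|b rs IH]; first by rewrite hm_nil mul1mx big_nil scale1r.
rewrite hm_cons -mulmxA IH -scalemxAr mulmxBl mul_scalar_mx Hy -scalerBl.
by rewrite scalerA big_cons mulrC.
Qed.

Lemma sumv_pr rs (z : 'cV[R]_n) : sumv (hm (pr rs) *m z) = \prod_(r <- rs) (- r) * sumv z.
Proof.
elim: rs => [|b rs IH]; first by rewrite hm_nil mul1mx big_nil mul1r.
rewrite hm_cons -mulmxA mulmxBl sumvB sumv_L mul_scalar_mx sumvZ IH big_cons.
by rewrite sub0r mulrA mulNr; ring.
Qed.

Lemma small_root (s : seq R) r : sorted <=%R s -> r \in s -> 0 \in s -> r < s`_1 -> r <= 0.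
Proof.
move=> Hs rin zin lt.
have hle := sorted_leq_nth le_trans lexx 0 Hs.
have ir : (index r s < size s)%N by rewrite index_mem.
have i0 : (index (0%R : R) s < size s)%N by rewrite index_mem.
have er := nth_index (0:R) rin.
have e0 := nth_index (0:R) zin.
case: (index r s) ir er => [|k] ir er.
  by rewrite -er -{2}e0; apply: hle => //; rewrite inE //.
have : s`_1 <= r.
  by rewrite -er; apply: hle => //; rewrite inE //; apply: leq_ltn_trans ir.
by rewrite leNgt lt.
Qed.

Lemma const_sum0 (x : 'cV[R]_n) : (forall i j, x i 0 = x j 0) -> sumv x = 0 -> x = 0.
Proof.
move=> Hc Hs.
have : sumv x = n%:R * x ord0 0.
  rewrite /sumv (eq_bigr (fun _ => x ord0 0)) ?sumr_const ?card_ord ?mulr_natl //.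
rewrite Hs => /eqP; rewrite eq_sym mulf_eq0 pnatr_eq0 /= => /eqP H0.
apply/matrixP => i j; rewrite (ord1 j) mxE (Hc i ord0) H0 //.
Qed.

Lemma CF_ind (s : seq R) (Hs : sorted <=%R s) (H0 : 0 \in s) :
  forall rs, uniq rs -> {subset rs <= s} -> forall z : 'cV[R]_n,
  hm (pr rs) *m z = 0 -> sumv z = 0 -> s`_1 * dot z z <= qf z.
Proof.
elim=> [|a rs IH] /= urs sub z Hz Hsz.
  rewrite hm_nil mul1mx in Hz; rewrite Hz dot0r mulr0; exact: Qf_ge0.
move/andP: urs => [ars urs].
set Q := hm (pr rs).
have hprod : \prod_(r <- rs) (a - r) != 0.
  rewrite prodf_seq_neq0; apply/allP => r rin /=; rewrite subr_eq0.
  by apply/eqP => ar; move: ars; rewrite ar rin.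
set c := (\prod_(r <- rs) (a - r))^-1.
have HL : L *m (Q *m z) = a *: (Q *m z).
  have : (L - a%:M) *m (Q *m z) = 0 by rewrite mulmxA -hm_cons.
  by rewrite mulmxBl mul_scalar_mx => /eqP; rewrite subr_eq0 => /eqP.
set y := c *: (Q *m z).
set w := z - y.
have Ly : L *m y = a *: y by rewrite /y -scalemxAr HL !scalerA mulrC.
have Qw : Q *m w = 0.
  rewrite /w mulmxBr /y -scalemxAr (eig_poly rs HL) scalerA mulVf // scale1r.
  by rewrite subrr.
have sy : sumv y = 0 by rewrite /y sumvZ sumv_pr Hsz !mulr0.
have sw : sumv w = 0 by rewrite /w sumvB Hsz sy subrr.
have IHw : s`_1 * dot w w <= qf w.
  apply: (IH urs _ w Qw sw) => r rin; apply: sub; by rewrite inE rin orbT.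
have dyw : dot y w = 0.
  by rewrite /y dotZl -dot_mulmx ?hm_sym // Qw dot0r mulr0.
have ez : z = y + w by rewrite /w addrC subrK.
have lsym := lap_sym R esym.
have qfy : qf y = a * dot y y by rewrite qf_dot // Ly dotZr.
have key : s`_1 * dot y y <= qf y.
  have dg := dot_ge0 y.
  case: (leP (s`_1) a) => [le|lt].
    rewrite qfy; nra.
  have ale := small_root Hs (sub a (mem_head _ _)) H0 lt.
  have qg := Qf_ge0 e (fun i => y i 0).
  have qy0 : qf y = 0.
    apply/eqP; rewrite eq_le qg andbT qfy; nra.
  have y0 : y = 0.
    apply: const_sum0 => //; apply: (Qf_const esym qy0 conn).
  by rewrite y0 dot0r mulr0 -y0 qy0.
clearbody y w.
have qfz : qf z = qf y + qf w.
  rewrite !qf_dot // ez mulmxDr !dotDl !dotDr Ly.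
  rewrite (dot_mulmx y) // Ly dotZr dotZl dyw dotZr (dotC w y) dyw !mulr0 addr0 add0r.
  by [].
have ddz : dot z z = dot y y + dot w w.
  by rewrite ez !dotDl !dotDr dyw (dotC w y) dyw addr0 add0r.
rewrite qfz ddz mulrDr; exact: lerD.
Qed.

Lemma zero_in (s : seq R) : char_poly L = pr s -> 0 \in s.
Proof.
move=> Hc; rewrite -root_prod_XsubC -/(pr s) -Hc /root horner_coef0 char_poly_det.
have -> : \det L = 0.
  apply/eqP/det0P; exists (const_mx 1).
    by apply/negP => /eqP/matrixP/(_ 0 0); rewrite !mxE => /eqP; rewrite oner_eq0.
  apply/matrixP => i j; rewrite !mxE.
  rewrite (eq_bigr (fun k => L k j)) ?lap_colsum // => k _; by rewrite mxE mul1r.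
by rewrite mulr0.
Qed.

Lemma CF (s : seq R) : sorted <=%R s -> char_poly L = pr s ->
  forall z : 'cV[R]_n, sumv z = 0 -> s`_1 * dot z z <= qf z.
Proof.
move=> Hs Hc z Hz.
apply: (CF_ind Hs (zero_in Hc) (undup_uniq s)) => //.
  by move=> r; rewrite mem_undup.
apply: undup_ker.
have := Cayley_Hamilton L; rewrite Hc => HC.
by rewrite /hm HC mul0mx.
Qed.


Lemma eig_col a : root (char_poly L) a ->
  exists2 x : 'cV[R]_n, L *m x = a *: x & x != 0.
Proof.
rewrite -eigenvalue_root_char => /eigenvalueP [v Hv vn0].
exists v^T.
  by rewrite -{1}(lap_sym R esym) -trmx_mul Hv linearZ.
by apply: contra vn0 => /eqP H; apply/eqP; apply: trmx_inj; rewrite H trmx0.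
Qed.

Lemma dot_gt0 (x : 'cV[R]_n) : x != 0 -> 0 < dot x x.
Proof.
move=> xn0; rewrite lt_def dot_ge0 andbT.
by apply: contra xn0 => /eqP /dot_eq0 ->.
Qed.

Lemma root_ge0 a : root (char_poly L) a -> 0 <= a.
Proof.
move=> /eig_col [x Hx xn0].
have q := Qf_ge0 e (fun i => x i 0).
have : qf x = a * dot x x by rewrite qf_dot // Hx dotZr.
rewrite /qf => Hq; rewrite Hq in q.
have dp := dot_gt0 xn0.
by rewrite (pmulr_lge0 _ dp) in q.
Qed.

Definition Mfirst : 'M[R]_n := \matrix_(i, j) (if j == ord0 then 1 else 0).

Lemma LM0 : L *m Mfirst = 0.
Proof.
apply/matrixP => i j; rewrite mxE [RHS]mxE.
rewrite (eq_bigr (fun k => L i k * (if j == ord0 then 1 else 0))); last first.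
  by move=> k _; rewrite [Mfirst _ _]mxE.
by rewrite -mulr_suml lap_rowsum // mul0r.
Qed.

Lemma LM_unit : \det (L + Mfirst) != 0.
Proof.
apply/negP => /det0P [v vn0 Hv].
have Hj : forall j, \sum_i v 0 i * L i j + (if j == ord0 then \sum_i v 0 i else 0) = 0.
  move=> j; have := congr1 (fun A : 'M[R]_(1, n) => A 0 j) Hv; rewrite !mxE => H.
  rewrite -[RHS]H [RHS](eq_bigr (fun i => v 0 i * L i j + v 0 i * (if j == ord0 then 1 else 0))); last first.
    by move=> i _; rewrite !mxE mulrDr.
  rewrite big_split /=; congr (_ + _); case: (j =P ord0) => _.
    by apply: eq_bigr => i _; rewrite mulr1.
  by rewrite big1 // => i _; rewrite mulr0.
have Hs : \sum_i v 0 i = 0.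
  have H : \sum_j (\sum_i v 0 i * L i j + (if j == ord0 then \sum_i v 0 i else 0)) = 0.
    by rewrite big1 // => j _; apply: Hj.
  rewrite big_split /= exchange_big /= big1 ?add0r in H; last first.
    by move=> i _; rewrite -mulr_sumr lap_rowsum // mulr0.
  by rewrite -big_mkcond /= big_pred1_eq in H.
have HvL : forall j, \sum_i v 0 i * L i j = 0.
  by move=> j; have := Hj j; rewrite Hs; case: (j =P ord0) => _; rewrite addr0.
have Lx : L *m v^T = 0.
  apply/matrixP => i k; rewrite (ord1 k) !mxE -[RHS](HvL i).
  apply: eq_bigr => j _; rewrite !mxE mulrC; congr (_ * _).
  by rewrite esym eq_sym; case: (j =P i) => // ->.
have q0 : qf v^T = 0 by rewrite qf_dot // Lx dot0r.
have : v^T = 0.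
  apply: const_sum0; first by apply: (Qf_const esym q0 conn).
  by rewrite /sumv -[RHS]Hs; apply: eq_bigr => i _; rewrite mxE.
move/eqP; rewrite -trmx0 (inj_eq trmx_inj) => /eqP v0.
by rewrite v0 eqxx in vn0.
Qed.

Lemma charM_trig : char_poly Mfirst = ('X - 1) * 'X ^+ m.
Proof.
rewrite char_poly_trig; last first.
  by apply/is_trig_mxP => i j lt; rewrite mxE; case: (j =P ord0) => // jeq; rewrite jeq ltn0 in lt.
rewrite big_ord_recl mxE eqxx; congr (_ * _).
rewrite (eq_bigr (fun _ => 'X)) ?prodr_const ?card_ord // => i _.
by rewrite mxE -(inj_eq val_inj) /= subr0.
Qed.

Lemma char_identity : char_poly L * char_poly Mfirst = 'X ^+ n * char_poly (L + Mfirst).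
Proof.
rewrite /char_poly -detZ -det_mulmx; congr (\det _).
rewrite /char_poly_mx mulmxBl !mulmxBr mul_scalar_mx mul_mx_scalar.
rewrite -map_mxM LM0 map_mx0 subr0 map_mxD scalerBr scalerDr mul_scalar_mx.
rewrite -!addrA; congr (_ + _); rewrite opprD addrC; by congr (_ + _).
Qed.

Lemma root_nth (s : seq R) k : char_poly L = pr s -> (k < size s)%N -> root (char_poly L) s`_k.
Proof. by move=> Hc ks; rewrite Hc root_prod_XsubC mem_nth. Qed.

Lemma lam_pos (s : seq R) : (0 < m)%N -> sorted <=%R s -> size s = n ->
  char_poly L = pr s -> 0 < s`_1.
Proof.
move=> m0 Hs sz Hc.
have m1 : (1 < size s)%N by rewrite sz.
have g0 := root_ge0 (root_nth Hc (ltnW m1)).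
have g1 := root_ge0 (root_nth Hc m1).
rewrite lt_def g1 andbT; apply/negP => /eqP H1.
have s01 : s`_0 <= s`_1.
  by apply: (sorted_leq_nth le_trans lexx 0 Hs) => //; rewrite inE // ltnW.
have H0 : s`_0 = 0 by rewrite H1 in s01; apply/eqP; rewrite eq_le g0 s01.
have Hp : pr s = 'X * 'X * pr (drop 2 s).
  move: H0 H1 m1; case: (s) => [|a [|b s']] //= -> -> _.
  by rewrite /pr !big_cons subr0 mulrA drop0.
have := char_identity; rewrite Hc Hp charM_trig exprS.
have -> : 'X * 'X * pr (drop 2 s) * (('X - 1) * 'X ^+ m) =
          'X * 'X ^+ m * ('X * pr (drop 2 s) * ('X - 1)) by ring.
move/(mulfI _) => HC.
have XN : 'X * 'X ^+ m != 0 :> {poly R}.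
  by rewrite -exprS expf_neq0 // polyX_eq0.
have := HC XN => /(congr1 (fun p => p.[0])).
rewrite !hornerE horner_coef0 char_poly_det => /eqP; rewrite eq_sym.
rewrite mulf_eq0 signr_eq0 /= => /eqP Hd.
by move: LM_unit; rewrite Hd eqxx.
Qed.

Lemma eigvec (s : seq R) : (0 < m)%N -> sorted <=%R s -> size s = n ->
  char_poly L = pr s ->
  exists x : 'cV[R]_n, [/\ L *m x = s`_1 *: x, sumv x = 0 & dot x x = 1].
Proof.
move=> m0 Hs sz Hc.
have m1 : (1 < size s)%N by rewrite sz.
have lp := lam_pos m0 Hs sz Hc.
have [x Hx xn0] := eig_col (root_nth Hc m1).
have sx : sumv x = 0.
  have := sumv_L x; rewrite Hx sumvZ => /eqP; rewrite mulf_eq0 => /orP [|/eqP //].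
  by rewrite gt_eqF.
have dp := dot_gt0 xn0.
set k := (Num.sqrt (dot x x))^-1.
exists (k *: x); split.
- by rewrite -scalemxAr Hx !scalerA mulrC.
- by rewrite sumvZ sx mulr0.
- rewrite dotZl dotZr mulrA /k -expr2 exprVn sqr_sqrtr ?dot_ge0 //.
  by rewrite mulVf // gt_eqF.
Qed.
End Spectral.

Set Implicit Arguments. Unset Strict Implicit. Unset Printing Implicit Defensive.

Lemma foldl_map_ (T1 T2 R : Type) (f : R -> T2 -> R) (g : T1 -> T2) z s :
  foldl f z (map g s) = foldl (fun w k => f w (g k)) z s.
Proof. by elim: s z => [|a s IH] z //=. Qed.

Section Seqs.
Variables (T : finType) (D : {pred T}).

Definition ext t (s : {ffun 'I_t -> T}) (p : T) : {ffun 'I_t.+1 -> T} :=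
  [ffun k => if unlift ord_max k is Some k' then s k' else p].
Definition restr t (s : {ffun 'I_t.+1 -> T}) : {ffun 'I_t -> T} :=
  [ffun k => s (widen_ord (leqnSn t) k)].

Lemma widen_lift t (k : 'I_t) : widen_ord (leqnSn t) k = lift ord_max k.
Proof. by apply: ord_inj; rewrite lift_max. Qed.

Lemma ext_widen t s p (k : 'I_t) : ext s p (widen_ord (leqnSn t) k) = s k.
Proof. by rewrite ffunE widen_lift liftK. Qed.

Lemma ext_max t s p : @ext t s p ord_max = p.
Proof. by rewrite ffunE unlift_none. Qed.

Lemma ext_restr t (s : {ffun 'I_t.+1 -> T}) : ext (restr s) (s ord_max) = s.
Proof.
apply/ffunP => k; rewrite ffunE.
case: unliftP => [j ->|->] //.
by rewrite ffunE widen_lift.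
Qed.

Lemma sum_ext (V : zmodType) t (F : {ffun 'I_t.+1 -> T} -> V) :
  \sum_(s : {ffun 'I_t.+1 -> T} | [forall k, s k \in D]) F s =
  \sum_(s : {ffun 'I_t -> T} | [forall k, s k \in D]) \sum_(p in D) F (ext s p).
Proof.
rewrite pair_big /=.
rewrite (reindex (fun u : {ffun 'I_t -> T} * T => ext u.1 u.2)) /=; last first.
  apply: onW_bij; exists (fun s => (restr s, s ord_max)).
    move=> [s p] /=; congr (_, _); last exact: ext_max.
    by apply/ffunP => k; rewrite ffunE ext_widen.
  move=> s; apply/ffunP => k; rewrite ffunE.
  case: unliftP => [j ->|->] //.
  by rewrite ffunE widen_lift.
apply: eq_bigl => -[s p] /=.
apply/forallP/andP => [H|[/forallP H Hp] k].
  split; last by have := H ord_max; rewrite ext_max.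
  by apply/forallP => k; have := H (widen_ord (leqnSn t) k); rewrite ext_widen.
by rewrite ffunE; case: unliftP => [j _|_] //; apply: H.
Qed.

Lemma card_seqs (R : realType) t :
  \sum_(s : {ffun 'I_t -> T} | [forall k, s k \in D]) (1 : R) = (#|D| ^ t)%:R.
Proof.
elim: t => [|t IH].
  rewrite (eq_bigl (fun _ => true)); last by move=> s; apply/forallP => -[].
  by rewrite sumr_const card_ffun card_ord expn0.
rewrite sum_ext.
rewrite (eq_bigr (fun _ => (#|D|%:R : R) * 1)); last first.
  by move=> s _; rewrite sumr_const mulr1.
by rewrite -mulr_sumr IH expnS natrM.
Qed.

End Seqs.

Section Process.
Variables (R : realType) (m : nat) (e : rel 'I_m.+1).
Hypotheses (esym : symmetric e) (eirr : irreflexive e)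
  (conn : forall i j, connect e i j).
Local Notation n := m.+1.
Local Notation L := (laplacian R e).
Local Notation E := (edges e).

Lemma edge_neq (p : 'I_n * 'I_n) : p \in E -> p.1 != p.2.
Proof. by rewrite inE => /andP [lt _]; rewrite neq_ltn lt. Qed.

Lemma sum_two (f g : 'I_n -> R) i j : i != j ->
  (forall k, k != i -> k != j -> f k = g k) ->
  \sum_k f k = \sum_k g k + (f i - g i) + (f j - g j).
Proof.
move=> ij H.
have : \sum_k f k - \sum_k g k = (f i - g i) + (f j - g j).
  have ji : j != i by rewrite eq_sym ij.
  rewrite -sumrB (bigD1 i) //= (bigD1 j ji) /=.
  rewrite big1 ?addr0 //; move=> k /andP [ki kj]; by rewrite H ?subrr.
move=> Hd; rewrite -addrA -Hd; ring.
Qed.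

Lemma sumv_avg p (v : 'cV[R]_n) : p \in E -> sumv (avg_step p v) = sumv v.
Proof.
move=> pE; rewrite /sumv.
have H := @sum_two (fun k => avg_step p v k 0) (fun k => v k 0) p.1 p.2 (edge_neq pE).
rewrite H; last by move=> k /negbTE k1 /negbTE k2; rewrite mxE k1 k2.
rewrite !mxE !eqxx orbT /= -addrA.
have -> : (v p.1 0 + v p.2 0) / 2 - v p.1 0 + ((v p.1 0 + v p.2 0) / 2 - v p.2 0) = 0 by field.
by rewrite addr0.
Qed.

Lemma sq_avg p (v : 'cV[R]_n) c : p \in E ->
  \sum_k ((avg_step p v) k 0 - c) ^+ 2 =
  \sum_k (v k 0 - c) ^+ 2 - (v p.1 0 - v p.2 0) ^+ 2 / 2.
Proof.
move=> pE.
have H := @sum_two (fun k => ((avg_step p v) k 0 - c) ^+ 2) (fun k => (v k 0 - c) ^+ 2) p.1 p.2 (edge_neq pE).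
rewrite H; last by move=> k /negbTE k1 /negbTE k2; rewrite mxE k1 k2.
rewrite !mxE !eqxx orbT /= -addrA.
by congr (_ + _); field.
Qed.

Lemma Qf_shift (f : 'I_n -> R) c : Qf e (fun i => f i - c) = Qf e f.
Proof. by apply: eq_bigr => p _; congr (_ ^+ 2); ring. Qed.

Lemma step_sq (w : 'cV[R]_n) c :
  \sum_(p in E) \sum_k ((avg_step p w) k 0 - c) ^+ 2 =
  #|E|%:R * \sum_k (w k 0 - c) ^+ 2 - Qf e (fun i => w i 0) / 2.
Proof.
rewrite (eq_bigr (fun p => \sum_k (w k 0 - c) ^+ 2 - (w p.1 0 - w p.2 0) ^+ 2 / 2)); last first.
  by move=> p pE; rewrite sq_avg.
by rewrite sumrB sumr_const mulr_natl /Qf -mulr_suml.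
Qed.

Lemma Lv_entry (v : 'cV[R]_n) k :
  (L *m v) k 0 = \sum_j (if e k j then v k 0 - v j 0 else 0).
Proof.
rewrite mxE.
rewrite (eq_bigr (fun j => (if k == j then (degree e k)%:R * v k 0 else 0) - (if e k j then v j 0 else 0))); last first.
  move=> j _; rewrite mxE; case: (k =P j) => [<-|_]; rewrite ?eirr; case: (e k j); rewrite ?mulr1 ?mulr0 ?subr0 ?sub0r; try ring.
rewrite sumrB (bigD1 k) //= eqxx big1 ?addr0; last first.
  by move=> j; rewrite eq_sym => /negbTE ->.
rewrite degreeE mulr_suml -sumrB; apply: eq_bigr => j _.
by case: (e k j); rewrite ?mul1r ?mul0r ?subr0.
Qed.

Lemma sum_avg_mx (v : 'cV[R]_n) :
  \sum_(p in E) avg_step p v = #|E|%:R *: v - 2^-1 *: (L *m v).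
Proof.
apply/matrixP => k j; rewrite (ord1 j) summxE.
have -> : (#|E|%:R *: v - 2^-1 *: (L *m v)) k 0 = #|E|%:R * v k 0 - 2^-1 * (L *m v) k 0.
  by rewrite !mxE.
rewrite Lv_entry.
pose G := fun a b : 'I_n => if k == a then (v b 0 - v a 0) / 2 else 0.
rewrite (eq_bigr (fun p => v k 0 + (G p.1 p.2 + G p.2 p.1))); last first.
  move=> p pE; rewrite mxE /G.
  have np := edge_neq pE.
  have [k1|nk1] := eqVneq k p.1.
    by rewrite k1 /= (negbTE np) addr0; field.
  have [k2|nk2] := eqVneq k p.2.
    by rewrite k2 /= add0r; field.
  by rewrite /= !addr0.
rewrite big_split /= sumr_const mulr_natl edge_sum //.
congr (_ + _).
rewrite (bigD1 k) //= [X in _ + X]big1 ?addr0; last first.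
  move=> i /negbTE ik; apply: big1 => b _; rewrite /G eq_sym ik.
  by case: (e i b).
rewrite mulr_sumr -sumrN; apply: eq_bigr => b _; rewrite /G eqxx.
by case: (e k b); rewrite ?mulr0 ?oppr0 //; field.
Qed.

Lemma foldl_ext (A B : Type) (f g : A -> B -> A) z s :
  (forall w x, f w x = g w x) -> foldl f z s = foldl g z s.
Proof. by move=> H; elim: s z => [|a s IH] z //=; rewrite H IH. Qed.

Lemma traj_ext t (v : 'cV[R]_n) (s : {ffun 'I_t -> 'I_n * 'I_n}) p :
  traj v (ext s p) = avg_step p (traj v s).
Proof.
rewrite /traj enum_ordSr foldl_rcons foldl_map_ ext_max; congr avg_step.
by apply: foldl_ext => w k; rewrite ext_widen.
Qed.

Lemma traj0 (v : 'cV[R]_n) (s : {ffun 'I_0 -> 'I_n * 'I_n}) : traj v s = v.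
Proof. by rewrite /traj enum_ord0. Qed.

Lemma restr_all t (s : {ffun 'I_t.+1 -> 'I_n * 'I_n}) : [forall k, s k \in E] ->
  [forall k, restr s k \in E] /\ s ord_max \in E.
Proof.
move=> /forallP H; split; last exact: H.
by apply/forallP => k; rewrite ffunE.
Qed.

Lemma sumv_traj t (v : 'cV[R]_n) (s : {ffun 'I_t -> 'I_n * 'I_n}) :
  [forall k, s k \in E] -> sumv (traj v s) = sumv v.
Proof.
elim: t s => [|t IH] s Hs; first by rewrite traj0.
have [H1 H2] := restr_all Hs.
by rewrite -(ext_restr s) traj_ext sumv_avg // IH.
Qed.

Variable lam : R.
Hypothesis CFh : forall z : 'cV[R]_n, sumv z = 0 -> lam * dot z z <= qf e z.

Lemma one_step (w : 'cV[R]_n) c : sumv w = n%:R * c ->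
  \sum_(p in E) \sum_k ((avg_step p w) k 0 - c) ^+ 2 <=
  (#|E|%:R - lam / 2) * \sum_k (w k 0 - c) ^+ 2.
Proof.
move=> Hw; rewrite step_sq.
set z := w - const_mx c.
have sz : sumv z = 0.
  rewrite /z sumvB Hw /sumv (eq_bigr (fun _ => c)); last by move=> i _; rewrite mxE.
  by rewrite sumr_const card_ord mulr_natl subrr.
have dz : dot z z = \sum_k (w k 0 - c) ^+ 2.
  by apply: eq_bigr => i _; rewrite !mxE expr2.
have qz : qf e z = Qf e (fun i => w i 0).
  rewrite -(Qf_shift (fun i => w i 0) c) /qf; apply: eq_bigr => p _; by rewrite !mxE.
have := CFh sz; rewrite dz qz => H.
set S := \sum_k (w k 0 - c) ^+ 2 in H *.
set Q := Qf e (fun i => w i 0) in H *.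
nra.
Qed.

Hypothesis alpha_ge0 : 0 <= #|E|%:R - lam / 2.

Lemma F_bound t (v : 'cV[R]_n) c : sumv v = n%:R * c ->
  \sum_(s : {ffun 'I_t -> 'I_n * 'I_n} | [forall k, s k \in E])
     \sum_k ((traj v s) k 0 - c) ^+ 2 <=
  (#|E|%:R - lam / 2) ^+ t * \sum_k (v k 0 - c) ^+ 2.
Proof.
move=> Hv; elim: t => [|t IH].
  rewrite (eq_bigr (fun _ => (\sum_k (v k 0 - c) ^+ 2) * 1)); last first.
    by move=> s _; rewrite traj0 mulr1.
  by rewrite -mulr_sumr card_seqs expn0 mulr1 expr0 mul1r.
rewrite sum_ext.
apply: (@le_trans _ _ ((#|E|%:R - lam / 2) *
   \sum_(s : {ffun 'I_t -> 'I_n * 'I_n} | [forall k, s k \in E])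
     \sum_k ((traj v s) k 0 - c) ^+ 2)).
  rewrite mulr_sumr; apply: ler_sum => s Hs.
  rewrite (eq_bigr (fun p => \sum_k ((avg_step p (traj v s)) k 0 - c) ^+ 2)); last first.
    by move=> p _; rewrite traj_ext.
  by apply: one_step; rewrite sumv_traj.
by rewrite exprS -mulrA; apply: ler_wpM2l.
Qed.

Lemma G_rec t (v : 'cV[R]_n) :
  \sum_(s : {ffun 'I_t.+1 -> 'I_n * 'I_n} | [forall k, s k \in E]) traj v s =
  #|E|%:R *: \sum_(s : {ffun 'I_t -> 'I_n * 'I_n} | [forall k, s k \in E]) traj v s
  - 2^-1 *: (L *m \sum_(s : {ffun 'I_t -> 'I_n * 'I_n} | [forall k, s k \in E]) traj v s).
Proof.
rewrite sum_ext.
rewrite (eq_bigr (fun s => #|E|%:R *: traj v s - 2^-1 *: (L *m traj v s))); last first.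
  move=> s _; rewrite -sum_avg_mx; apply: eq_bigr => p _; by rewrite traj_ext.
by rewrite sumrB -!scaler_sumr mulmx_sumr.
Qed.

Lemma G_eig t (x : 'cV[R]_n) : L *m x = lam *: x ->
  \sum_(s : {ffun 'I_t -> 'I_n * 'I_n} | [forall k, s k \in E]) traj x s =
  (#|E|%:R - lam / 2) ^+ t *: x.
Proof.
move=> Lx; elim: t => [|t IH].
  rewrite (eq_bigr (fun _ => 1 *: x)); last by move=> s _; rewrite traj0 scale1r.
  by rewrite -scaler_suml card_seqs expn0 expr0.
rewrite G_rec IH -scalemxAr Lx !scalerA -scalerBl; congr (_ *: _).
by rewrite exprS; field.
Qed.

End Process.

Lemma CS (R : realType) (I : finType) (P : pred I) (a : I -> R) :
  (\sum_(i | P i) a i) ^+ 2 <= (\sum_(i | P i) 1) * \sum_(i | P i) a i ^+ 2.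
Proof.
have H : 0 <= \sum_(i | P i) \sum_(j | P j) (a i - a j) ^+ 2.
  by apply: sumr_ge0 => i _; apply: sumr_ge0 => j _; apply: sqr_ge0.
have E1 : \sum_(i | P i) \sum_(j | P j) (a i - a j) ^+ 2 =
   \sum_(i | P i) \sum_(j | P j) (a i ^+ 2 * 1) + \sum_(i | P i) \sum_(j | P j) (1 * a j ^+ 2)
   - 2 * \sum_(i | P i) \sum_(j | P j) (a i * a j).
  rewrite mulr_sumr -big_split /= -sumrB; apply: eq_bigr => i _.
  rewrite mulr_sumr -big_split /= -sumrB; apply: eq_bigr => j _; ring.
have E2 : \sum_(i | P i) \sum_(j | P j) (a i ^+ 2 * 1) = (\sum_(i | P i) 1) * \sum_(i | P i) a i ^+ 2.
  rewrite mulrC mulr_suml; apply: eq_bigr => i _; by rewrite mulr_sumr.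
have E3 : \sum_(i | P i) \sum_(j | P j) (1 * a j ^+ 2) = (\sum_(i | P i) 1) * \sum_(i | P i) a i ^+ 2.
  rewrite mulr_suml; apply: eq_bigr => i _; by rewrite mulr_sumr.
have E4 : \sum_(i | P i) \sum_(j | P j) (a i * a j) = (\sum_(i | P i) a i) ^+ 2.
  rewrite expr2 mulr_suml; apply: eq_bigr => i _; by rewrite mulr_sumr.
rewrite E1 E2 E3 E4 in H.
lra.
Qed.

Unset Implicit Arguments. Set Strict Implicit. Set Printing Implicit Defensive.
Local Open Scope classical_set_scope.

Lemma sq_norm2 (R : realType) n (w : 'cV[R]_n) : norm2 w ^+ 2 = \sum_i w i 0 ^+ 2.
Proof. by rewrite /norm2 sqr_sqrtr // sumr_ge0 // => i _; apply: sqr_ge0. Qed.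

Lemma powR_half (R : realType) (a : R) (t : nat) : 0 <= a ->
  a `^ (t%:R / 2) = Num.sqrt (a ^+ t).
Proof.
move=> a0; rewrite powRrM powR_mulrn // powR12_sqrt //.
exact: exprn_ge0.
Qed.

Lemma sum_dev (R : realType) n (v : 'cV[R]_n) c : \sum_i v i 0 = n%:R * c ->
  \sum_i (v i 0 - c) ^+ 2 = \sum_i v i 0 ^+ 2 - n%:R * c ^+ 2.
Proof.
move=> Hs.
have -> : \sum_i (v i 0 - c) ^+ 2 = \sum_i v i 0 ^+ 2 - 2 * c * \sum_i v i 0 + \sum_(i < n) c ^+ 2.
  rewrite mulr_sumr -sumrB -big_split /=; apply: eq_bigr => i _; ring.
rewrite sumr_const card_ord Hs -mulr_natl; ring.
Qed.

Theorem theorem3 (R : realType) (n : nat) (e : rel 'I_n)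
  (Hn : (1 < n)%N) (esym : symmetric e) (eirr : irreflexive e)
  (conn : forall i j : 'I_n, connect e i j)
  (lam : R) (Hlam : is_lambda2 (laplacian R e) lam) :
  let gamma : R := #|edges e|%:R / lam in
  (forall (v0 : 'cV[R]_n) (t : nat),
     Num.sqrt (exp_sqdist e t v0)
       <= (1 - 1 / (2 * gamma)) `^ (t%:R / 2) * norm2 (vbar v0 - v0)) /\
  (forall t : nat,
     (1 - 1 / (2 * gamma)) `^ t%:R
       <= sup [set Num.sqrt (exp_sqdist e t v0) | v0 in [set v : 'cV[R]_n | norm2 v = 1]]).
Proof.
case: n e Hn esym eirr conn Hlam => [//|m] e Hn esym eirr conn Hlam gamma.
have m0 : (0 < m)%N by [].
have [s [Hs sz Hc Hl]] := Hlam.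
have lpos : 0 < lam by rewrite Hl; apply: (lam_pos esym eirr conn m0 Hs sz Hc).
have CFh : forall z : 'cV[R]_m.+1, sumv z = 0 -> lam * dot z z <= qf e z.
  by move=> z Hz; rewrite Hl; apply: (CF esym eirr conn Hs Hc).
have [x [Lx sx dx]] := eigvec esym eirr conn m0 Hs sz Hc.
rewrite -Hl in Lx.
pose E : R := #|edges e|%:R.
have Egt : lam / 2 <= E.
  have := step_sq e x 0.
  have -> : \sum_k (x k 0 - 0) ^+ 2 = 1.
    by rewrite -dx; apply: eq_bigr => i _; rewrite subr0 expr2.
  have -> : Qf e (fun i => x i 0) = lam by rewrite -/(qf e x) qf_dot // Lx dotZr dx mulr1.
  move=> H.
  have : 0 <= \sum_(p in edges e) \sum_k (avg_step p x k 0 - 0) ^+ 2.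
    by apply: sumr_ge0 => p _; apply: sumr_ge0 => k _; apply: sqr_ge0.
  rewrite H /E; lra.
have Epos : 0 < E by lra.
have alpha_ge0 : 0 <= E - lam / 2 by lra.
set a := 1 - 1 / (2 * gamma).
have ha : a = (E - lam / 2) / E.
  by rewrite /a /gamma -/E; field; rewrite gt_eqF // gt_eqF.
have a0 : 0 <= a by rewrite ha divr_ge0 // ltW.
have a1 : a <= 1 by rewrite ha ler_pdivrMr // mul1r; lra.
have P1 : forall (v0 : 'cV[R]_m.+1) (t : nat),
    Num.sqrt (exp_sqdist e t v0) <= a `^ (t%:R / 2) * norm2 (vbar v0 - v0).
  move=> v0 t.
  pose c := (\sum_i v0 i 0) / m.+1%:R.
  have Hv : sumv v0 = m.+1%:R * c by rewrite /c mulrC divfK // pnatr_eq0.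
  have Hexp : exp_sqdist e t v0 =
      (\sum_(s : {ffun 'I_t -> 'I_m.+1 * 'I_m.+1} | [forall k, s k \in edges e])
         \sum_k ((traj v0 s) k 0 - c) ^+ 2) / E ^+ t.
    rewrite /exp_sqdist; congr (_ / _); apply: eq_bigr => u _.
    by rewrite sq_norm2; apply: eq_bigr => i _; rewrite !mxE.
  have Hb := F_bound CFh alpha_ge0 t Hv.
  have hS : norm2 (vbar v0 - v0) = Num.sqrt (\sum_k (v0 k 0 - c) ^+ 2).
    by rewrite /norm2; congr Num.sqrt; apply: eq_bigr => i _; rewrite !mxE -sqrrN opprB.
  rewrite Hexp hS powR_half // -sqrtrM ?exprn_ge0 //; apply: ler_wsqrtr.
  rewrite ha expr_div_n mulrAC; apply: ler_wpM2r => //.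
  by rewrite invr_ge0 exprn_ge0 // ltW.
split => //.
move=> t.
rewrite powR_mulrn //.
have nx : norm2 x = 1.
  rewrite /norm2 (eq_bigr (fun i => x i 0 * x i 0)); last by move=> i _; rewrite expr2.
  by rewrite -/(dot x x) dx sqrtr1.
have hub : has_ubound [set Num.sqrt (exp_sqdist e t v0) | v0 in [set v : 'cV[R]_m.+1 | norm2 v = 1]].
  exists 1 => y [v0 Hv0 <-].
  apply: le_trans (P1 v0 t) _.
  have h1 : a `^ (t%:R / 2) <= 1.
    by rewrite powR_half // -sqrtr1 ler_wsqrtr // exprn_ile1.
  have h2 : norm2 (vbar v0 - v0) <= 1.
    pose c := (\sum_i v0 i 0) / m.+1%:R.
    have Hv : \sum_i v0 i 0 = m.+1%:R * c by rewrite /c mulrC divfK // pnatr_eq0.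
    rewrite -Hv0 /norm2; apply: ler_wsqrtr.
    rewrite (eq_bigr (fun i => (v0 i 0 - c) ^+ 2)); last first.
      by move=> i _; rewrite !mxE -sqrrN opprB.
    rewrite sum_dev // lerBlDr lerDl.
    by rewrite mulr_ge0 // sqr_ge0.
  have h3 : 0 <= a `^ (t%:R / 2) by apply: powR_ge0.
  have h4 : 0 <= norm2 (vbar v0 - v0) by apply: sqrtr_ge0.
  nra.
have memx : [set Num.sqrt (exp_sqdist e t v0) | v0 in [set v : 'cV[R]_m.+1 | norm2 v = 1]]
    (Num.sqrt (exp_sqdist e t x)) by exists x.
apply: le_trans (ub_le_sup hub memx).
have Hc0 : (\sum_i x i 0) / m.+1%:R = 0 by rewrite -/(sumv x) sx mul0r.
pose F := \sum_(s : {ffun 'I_t -> 'I_m.+1 * 'I_m.+1} | [forall k, s k \in edges e])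
         \sum_k ((traj x s) k 0) ^+ 2.
have Hexp : exp_sqdist e t x = F / E ^+ t.
  rewrite /exp_sqdist; congr (_ / _); apply: eq_bigr => u _.
  by rewrite sq_norm2; apply: eq_bigr => i _; rewrite !mxE Hc0 subr0.
have HN : \sum_(s : {ffun 'I_t -> 'I_m.+1 * 'I_m.+1} | [forall k, s k \in edges e]) (1 : R) = E ^+ t.
  by rewrite card_seqs natrX.
have HG := G_eig esym eirr t Lx.
have key : (E - lam / 2) ^+ t ^+ 2 <= E ^+ t * F.
  have : \sum_k ((E - lam / 2) ^+ t * x k 0) ^+ 2 <= \sum_k (E ^+ t * 
      \sum_(s : {ffun 'I_t -> 'I_m.+1 * 'I_m.+1} | [forall k, s k \in edges e]) ((traj x s) k 0) ^+ 2).
    apply: ler_sum => k _.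
    have := CS (fun s : {ffun 'I_t -> 'I_m.+1 * 'I_m.+1} => [forall k, s k \in edges e]) (fun s => (traj x s) k 0).
    by rewrite HN -summxE HG mxE.
  rewrite -mulr_sumr /F exchange_big /=.
  have -> : \sum_k ((E - lam / 2) ^+ t * x k 0) ^+ 2 = (E - lam / 2) ^+ t ^+ 2.
    rewrite (eq_bigr (fun k => (E - lam / 2) ^+ t ^+ 2 * (x k 0 * x k 0))); last first.
      by move=> k _; rewrite exprMn expr2.
    by rewrite -mulr_sumr -/(dot x x) dx mulr1.
  by [].
rewrite Hexp -[a ^+ t]ger0_norm ?exprn_ge0 // -sqrtr_sqr; apply: ler_wsqrtr.
have Nt : 0 < E ^+ t by apply: exprn_gt0.
rewrite ha expr_div_n -subr_ge0.
have -> : F / E ^+ t - ((E - lam / 2) ^+ t / E ^+ t) ^+ 2 =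
    (E ^+ t * F - (E - lam / 2) ^+ t ^+ 2) / (E ^+ t) ^+ 2.
  by field; rewrite gt_eqF.
by rewrite divr_ge0 ?subr_ge0 // exprn_ge0 // ltW.
Qed.
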